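(* Let $R\subseteq S$ be an extension of commutative rings such that $S$ is well-centered on $R$. If $M$ is a maximal ideal of $R$ with $MS\neq S$, then $MS$ is a maximal ideal of $S$.
   Context: All rings are commutative with identity. An extension ring $S$ of $R$ is well-centered on $R$ if for each $s\in S$ there is a unit $u$ of $S$ with $us\in R$. *)

(* Defs.v *)
From HB Require Import structures.
From mathcomp Require Import all_boot all_order all_algebra.
Set Implicit Arguments. Unset Strict Implicit. Unset Printing Implicit Defensive.
Import GRing.Theory.
Local Open Scope ring_scope.

Definition is_subring (S : comPzRingType) (R : S -> Prop) : Prop :=
  [/\ R 1, (forall x y, R x -> R y -> R (x - y)) & (forall x y, R x -> R y -> R (x * y))].

Definition is_unit (S : comPzRingType) (u : S) : Prop := exists v : S, u * v = 1.

Definition well_centered (S : comPzRingType) (R : S -> Prop) : Prop :=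
  forall s : S, exists u : S, is_unit u /\ R (u * s).

Definition is_ideal (S : comPzRingType) (R I : S -> Prop) : Prop :=
  [/\ forall x, I x -> R x,
      I 0,
      (forall x y, I x -> I y -> I (x + y)) &
      (forall r x, R r -> I x -> I (r * x))].

Definition is_maximal_ideal (S : comPzRingType) (R I : S -> Prop) : Prop :=
  [/\ is_ideal R I,
      ~ I 1 &
      forall J : S -> Prop, is_ideal R J -> (forall x, I x -> J x) ->
        J 1 \/ (forall x, J x -> I x)].

Definition ext_ideal (S : comPzRingType) (M : S -> Prop) : S -> Prop :=
  fun x => exists (n : nat) (s m : 'I_n -> S),
    (forall i, M (m i)) /\ x = \sum_(i < n) s i * m i.

Definition whole (S : comPzRingType) : S -> Prop := fun _ => True.

(* Main.v *)
Require Import Defs.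
From mathcomp Require Import all_boot all_order all_algebra.
Local Open Scope ring_scope.
Import GRing.Theory.

Lemma ext_add (S : comPzRingType) (M : S -> Prop) x y :
  ext_ideal M x -> ext_ideal M y -> ext_ideal M (x + y).
Proof.
move=> [n1 [s1 [m1 [Hm1 ->]]]] [n2 [s2 [m2 [Hm2 ->]]]].
exists (n1 + n2)%N.
exists (fun i => match split i with inl j => s1 j | inr k => s2 k end).
exists (fun i => match split i with inl j => m1 j | inr k => m2 k end).
split.
  by move=> i; case: (split i).
rewrite big_split_ord /=; congr (_ + _); apply: eq_bigr => i _.
  by rewrite (unsplitK (inl i)).
by rewrite (unsplitK (inr i)).
Qed.

Lemma ext_mul (S : comPzRingType) (M : S -> Prop) r x :
  ext_ideal M x -> ext_ideal M (r * x).
Proof.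
move=> [n [s [m [Hm ->]]]].
exists n, (fun i => r * s i), m; split => //.
by rewrite mulr_sumr; apply: eq_bigr => i _; rewrite mulrA.
Qed.

Lemma ext_in (S : comPzRingType) (M : S -> Prop) x : M x -> ext_ideal M x.
Proof.
move=> Mx; exists 1%N, (fun _ => 1), (fun _ => x); split => //.
by rewrite big_ord1 mul1r.
Qed.

Theorem proposition3p2 (S : comPzRingType) (R : S -> Prop) (M : S -> Prop) :
  is_subring R -> well_centered R ->
  is_maximal_ideal R M ->
  ~ (forall x : S, ext_ideal M x) ->
  is_maximal_ideal (@whole S) (ext_ideal M).
Proof.
move=> [R1 RB RM] Hwc [[MR M0 MD MM] NM1 Mmax] Hne.
have R0 : R 0 by have := RB 1 1 R1 R1; rewrite subrr.
have RD : forall x y, R x -> R y -> R (x + y).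
  move=> x y Rx Ry; have := RB x (0 - y) Rx (RB 0 y R0 Ry); by rewrite sub0r opprK.
have Iid : is_ideal (@whole S) (ext_ideal M).
  split => //.
  - by exists 0%N, (fun _ => 0), (fun _ => 0); split => //; rewrite big_ord0.
  - exact: ext_add.
  - by move=> r x _; apply: ext_mul.
split => //.
  by move=> H1; apply: Hne => x; rewrite -(mulr1 x); apply: ext_mul.
move=> J [_ J0 JD JM] HJ.
have JRid : is_ideal R (fun x => J x /\ R x).
  split.
  - by move=> x [].
  - by [].
  - by move=> x y [Jx Rx] [Jy Ry]; split; [apply: JD | apply: RD].
  - by move=> r x Rr [Jx Rx]; split; [apply: JM | apply: RM].
have sub : forall x, M x -> J x /\ R x.
  by move=> x Mx; split; [apply: HJ; apply: ext_in | apply: MR].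
case: (Mmax _ JRid sub) => [[J1 _]|H]; [by left | right].
move=> x Jx.
have [u [[v Huv] Rux]] := Hwc x.
have Mux : M (u * x) by apply: H; split => //; apply: JM.
have -> : x = v * (u * x) by rewrite mulrA (mulrC v) Huv mul1r.
exact/ext_mul/ext_in.
Qed.
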